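(* Assume Case 2 holds, $d=0$ and $\delta<T_{s-1}$. Then for every $n\ge1$, $Q^n$ contains the term $z^{\gamma_n}$ (where $\gamma_n=\gamma\delta^{n-1}$), and $w_l(Q^n)=\gamma_n$ for every $l\in[l_1,\alpha]$. Moreover, for every $n\ge2$, either $N(Q^n)=\{(x,y):x\ge\gamma_n,y\ge0\}$, or the edge of $N(Q^n)$ whose right endpoint is the vertex $(\gamma_n,0)$ has slope strictly less than $-l_1^{-1}$ (i.e. it is strictly steeper than the edge of $N(q)$ ending at $(\gamma,0)$).
   Context: Let $f(z,w)=(p(z),q(z,w))$ be a holomorphic skew product germ at the origin of $\mathbb{C}^2$ with $f(0,0)=(0,0)$, where $p(z)=a_\delta z^\delta+O(z^{\delta+1})$ with $a_\delta\neq0$ and integer $\delta\ge1$, and $q(z,w)=\sum_{i+j\ge1}b_{ij}z^iw^j$ is not identically zero. For $n\ge1$ write $f^n=(p^n,Q^n)$. For a nonzero germ $g=\sum g_{ij}z^iw^j$, say $g$ contains $z^aw^b$ if $g_{ab}\ne0$, and for real $l>0$ let $w_l(g)=\min\{i+lj: g_{ij}\neq0\}$. The Newton polygon $N(g)$ is the convex hull of $\bigcup_{g_{ij}\neq0}\{(x,y):x\ge i,\ y\ge j\}$. Let $(n_1,m_1),\dots,(n_s,m_s)$ be the vertices of $N(q)$ with $n_1<\cdots<n_s$, $m_1>\cdots>m_s$; for $1\le k\le s-1$ let $T_k$ be the $y$-intercept of the line through $(n_k,m_k)$ and $(n_{k+1},m_{k+1})$. Case 2 means: $s>1$ and $\delta\le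 T_{s-1}$; set $(\gamma,d)=(n_s,m_s)$ and $l_1=\frac{n_s-n_{s-1}}{m_{s-1}-m_s}$. Let $\alpha=\gamma/(\delta-d)$. *)

(* Defs.v *)
From HB Require Import structures.
From mathcomp Require Import all_boot all_order all_algebra.
From mathcomp.real_closed Require Import complex.
From mathcomp Require Import reals.
Set Implicit Arguments.
Unset Strict Implicit.
Unset Printing Implicit Defensive.
Import Order.TTheory GRing.Theory Num.Theory.
Local Open Scope ring_scope.

Section Germs.
Variable R : realType.
Local Notation C := (R[i]).

(* a formal power series in (z,w) : coefficient of z^i w^j *)
Definition ser2 := nat -> nat -> C.
Definition ser1 := nat -> C.

(* convergent power series (holomorphic germ at 0): Cauchy-type bound
   |c_ij| rho^(i+j) <= M for some rho > 0 (rho, M are taken in C; the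
   order of C forces them to be real), i.e. the series converges on a
   polydisc around 0 *)
Definition convergent2 (g : ser2) : Prop :=
  exists (M rho : C), 0 < rho /\ forall i j, `|g i j| * rho ^+ (i + j) <= M.
Definition convergent1 (g : ser1) : Prop :=
  exists (M rho : C), 0 < rho /\ forall i, `|g i| * rho ^+ i <= M.

Definition smul (f g : ser2) : ser2 := fun a b =>
  \sum_(i < a.+1) \sum_(j < b.+1) f i j * g (a - i)%N (b - j)%N.
Definition sone : ser2 := fun a b => if (a == 0%N) && (b == 0%N) then 1 else 0.
Definition spow (f : ser2) (k : nat) : ser2 := iter k (smul f) sone.

(* composition g(u(z,w), v(z,w)), for u, v without constant term: only
   the terms g_ij with i + j <= a + b contribute to the coefficient (a,b) *)
Definition scomp (g u v : ser2) : ser2 := fun a b =>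
  \sum_(i < (a + b).+1) \sum_(j < (a + b).+1)
     g i j * smul (spow u i) (spow v j) a b.

Definition lift1 (p : ser1) : ser2 := fun i j => if j == 0%N then p i else 0.

Definition sZ : ser2 := fun i j => if (i == 1%N) && (j == 0%N) then 1 else 0.
Definition sW : ser2 := fun i j => if (i == 0%N) && (j == 1%N) then 1 else 0.

(* f^n = (p^n, Q^n), with f^0 = id and f^(n+1) = f o f^n *)
Fixpoint iterf (p : ser1) (q : ser2) (n : nat) : ser2 * ser2 :=
  match n with
  | 0 => (sZ, sW)
  | k.+1 => let F := iterf p q k in
            (scomp (lift1 p) F.1 F.2, scomp q F.1 F.2)
  end.

Definition Qn (p : ser1) (q : ser2) (n : nat) : ser2 := (iterf p q n).2.

(* Newton polygon: convex hull of the union of the quadrants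
   {x >= i, y >= j} over the support of g (finite convex combinations) *)
Definition newton (g : ser2) (x y : R) : Prop :=
  exists (k : nat) (lam : 'I_k -> R) (px py : 'I_k -> R),
    (forall t, 0 <= lam t) /\ \sum_(t < k) lam t = 1 /\
    (forall t, exists i j : nat, g i j != 0 /\ (i%:R <= px t) /\ (j%:R <= py t)) /\
    x = \sum_(t < k) lam t * px t /\ y = \sum_(t < k) lam t * py t.

Definition is_vertex (g : ser2) (x y : R) : Prop :=
  newton g x y /\
  forall (x1 y1 x2 y2 t : R), newton g x1 y1 -> newton g x2 y2 ->
    0 < t < 1 -> x = t * x1 + (1 - t) * x2 -> y = t * y1 + (1 - t) * y2 ->
    x1 = x2 /\ y1 = y2.

Definition wl_eq (g : ser2) (l v : R) : Prop :=
  (exists i j : nat, g i j != 0 /\ i%:R + l * j%:R = v) /\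
  (forall i j : nat, g i j != 0 -> v <= i%:R + l * j%:R).

Definition yintercept (n1 m1 n2 m2 : R) : R :=
  m1 - (m2 - m1) / (n2 - n1) * n1.

End Germs.

(* Main.v *)
Require Import Defs.
From HB Require Import structures.
From mathcomp Require Import all_boot all_order all_algebra.
From mathcomp.real_closed Require Import complex.
From mathcomp Require Import reals.
From mathcomp Require Import zify ring lra.
From Stdlib Require Import Classical.
Import Order.TTheory GRing.Theory Num.Theory.
Local Open Scope ring_scope.
Set Implicit Arguments.
Unset Strict Implicit.

Lemma ex_min (P : nat -> Prop) : (exists n, P n) -> exists n, P n /\ forall m, P m -> (n <= m)%N.
Proof.
move=> [n Pn]; apply: NNPP => H.
suff: forall k m, (m <= k)%N -> ~ P m by move=> /(_ n n (leqnn n)).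
elim=> [|k IH] m hm Pm.
- apply: H; exists m; split=> // m' _; move: hm; rewrite leqn0 => /eqP ->; done.
- apply: H; exists m; split=> // m' Pm'; rewrite leqNgt; apply/negP => lt.
  by apply: (IH m') => //; lia.
Qed.

Section S.
Variable R : realType.
Local Notation C := (R[i]).
Implicit Types (f g u v : ser2 R).

Lemma sum_nz {n} {F : 'I_n -> C} : \sum_(i < n) F i != 0 -> exists i, F i != 0.
Proof.
move=> H; apply: NNPP => N; move: H; rewrite big1 ?eqxx // => i _.
by apply/eqP; apply/negPn/negP => h; apply: N; exists i.
Qed.

Lemma smul_nz f g a b : smul f g a b != 0 ->
  exists i j, [/\ (i <= a)%N, (j <= b)%N, f i j != 0 & g (a-i)%N (b-j)%N != 0].
Proof.
rewrite /smul => H0; have [i H1] := sum_nz H0; have [j H] := sum_nz H1.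
exists i, j; split; [by rewrite -ltnS ltn_ord|by rewrite -ltnS ltn_ord| |].
- by apply: contraNneq H => ->; rewrite mul0r.
- by apply: contraNneq H => ->; rewrite mulr0.
Qed.

Lemma scomp_nz g u v a b : scomp g u v a b != 0 ->
  exists i j, g i j != 0 /\ smul (spow u i) (spow v j) a b != 0.
Proof.
rewrite /scomp => H0; have [i H1] := sum_nz H0; have [j H] := sum_nz H1.
exists i, j; split.
- by apply: contraNneq H => ->; rewrite mul0r.
- by apply: contraNneq H => ->; rewrite mulr0.
Qed.

Definition ordge g (A B c : nat) := forall i j, g i j != 0 -> (c <= A * i + B * j)%N.
Definition flat g := forall i j, g i j != 0 -> j = 0%N.

Lemma ordge_smul f g A B c1 c2 : ordge f A B c1 -> ordge g A B c2 ->
  ordge (smul f g) A B (c1 + c2)%N.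
Proof.
move=> hf hg a b /smul_nz [i [j [hi hj h1 h2]]].
have := hf _ _ h1; have := hg _ _ h2.
move: (subnKC hi) (subnKC hj); set x := (a - i)%N; set y := (b - j)%N.
move=> <- <-; rewrite !mulnDr; lia.
Qed.

Lemma ordge_sone A B : ordge (@sone R) A B 0.
Proof. by []. Qed.

Lemma flat_sone : flat (@sone R).
Proof. by move=> i j; rewrite /sone; case: ifP => [/andP [_ /eqP]|]; rewrite ?eqxx. Qed.

Lemma ordge_spow f A B c k : ordge f A B c -> ordge (spow f k) A B (k * c)%N.
Proof.
move=> hf; elim: k => [|k IH]; first by rewrite mul0n; apply: ordge_sone.
by rewrite mulSn; apply: ordge_smul.
Qed.

Lemma flat_smul f g : flat f -> flat g -> flat (smul f g).
Proof.
move=> hf hg a b /smul_nz [i [j [hi hj h1 h2]]].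
have := hf _ _ h1; have := hg _ _ h2; lia.
Qed.

Lemma flat_spow f k : flat f -> flat (spow f k).
Proof.
move=> hf; elim: k => [|k IH]; first exact: flat_sone.
exact: flat_smul.
Qed.

Lemma ordge0 g A B : ordge g A B 0.
Proof. by []. Qed.

Lemma flat_ord f e A B : flat f -> ordge f 1 0 e -> ordge f A B (A * e)%N.
Proof.
move=> hf ho i j nz; have := hf _ _ nz; have := ho _ _ nz.
move=> h1 h2; rewrite h2 muln0 addn0 mul1n muln0 addn0 in h1 *.
by rewrite leq_mul2l h1 orbT.
Qed.

Lemma smul_pow_ord u v i j a b A B cu cv :
  smul (spow u i) (spow v j) a b != 0 -> ordge u A B cu -> ordge v A B cv ->
  (i * cu + j * cv <= A * a + B * b)%N.
Proof.
move=> nz hu hv.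
exact: (ordge_smul (ordge_spow (k:=i) hu) (ordge_spow (k:=j) hv) nz).
Qed.

Lemma smul_pow_flat u v i a b :
  smul (spow u i) (spow v 0) a b != 0 -> flat u -> b = 0%N.
Proof.
move=> nz hu; exact: (flat_smul (flat_spow (k:=i) hu) flat_sone nz).
Qed.

Lemma sum2_single n m (F : 'I_n -> 'I_m -> C) (i0 : 'I_n) (j0 : 'I_m) :
  (forall i j, (i != i0) || (j != j0) -> F i j = 0) ->
  \sum_i \sum_j F i j = F i0 j0.
Proof.
move=> H; rewrite (bigD1 i0) //= [X in _ + X]big1 ?addr0; last first.
  by move=> i hi; rewrite big1 // => j _; apply: H; rewrite hi.
rewrite (bigD1 j0) //= [X in _ + X]big1 ?addr0 // => j hj; by apply: H; rewrite hj orbT.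
Qed.

Lemma smul_sone f a b : smul f (@sone R) a b = f a b.
Proof.
rewrite /smul (sum2_single (i0 := ord_max) (j0 := ord_max)) /=.
  by rewrite !subnn /sone /= mulr1.
move=> i j hij; rewrite /sone.
have hi := ltn_ord i; have hj := ltn_ord j.
case: ifP; last by rewrite mulr0.
move=> /andP [/eqP h1 /eqP h2]; exfalso; move: hij.
have -> : i = ord_max by apply/val_inj => /=; lia.
have -> : j = ord_max by apply/val_inj => /=; lia.
by rewrite !eqxx.
Qed.

Lemma spow_lead f d k : flat f -> ordge f 1 0 d -> spow f k (k * d)%N 0 = f d 0 ^+ k.
Proof.
move=> hf ho; elim: k => [|k IH]; first by rewrite mul0n /= /sone /= expr0.
have hd : (d < (k.+1 * d).+1)%N by rewrite mulSn; lia.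
rewrite [LHS]/= /smul (sum2_single (i0 := Ordinal hd) (j0 := ord0)) /=.
  by rewrite mulSn addKn subn0 IH exprS.
move=> i j hij.
have j0 : (j : nat) = 0%N by have := ltn_ord j; lia.
have hi : (i : nat) != d.
  apply: contraTneq hij => e; rewrite negb_or !negbK; apply/andP; split.
    by apply/eqP/val_inj.
  by apply/eqP/val_inj.
case: (eqVneq (f i j) 0) => [->|nz]; first by rewrite mul0r.
rewrite j0 in nz *; have := ho _ _ nz; rewrite mul1n muln0 addn0 => hdi.
case: (eqVneq (spow f k (k.+1 * d - i)%N (0 - 0)%N) 0) => [->|nz2]; first by rewrite mulr0.
exfalso; have := ordge_spow (k:=k) ho nz2; rewrite mul1n muln0 addn0.
have := ltn_ord i; move: hi hdi; move: (i : nat) => i' hi hdi.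
rewrite mulSn; lia.
Qed.

Lemma scomp_single g u v a b i0 j0 :
  (i0 <= a + b)%N -> (j0 <= a + b)%N ->
  (forall i j, g i j != 0 -> smul (spow u i) (spow v j) a b != 0 -> i = i0 /\ j = j0) ->
  scomp g u v a b = g i0 j0 * smul (spow u i0) (spow v j0) a b.
Proof.
move=> hi hj H; rewrite -ltnS in hi; rewrite -ltnS in hj.
rewrite /scomp (sum2_single (i0 := Ordinal hi) (j0 := Ordinal hj)) //.
move=> i j hij.
case: (eqVneq (g i j) 0) => [->|nz]; first by rewrite mul0r.
case: (eqVneq (smul (spow u i) (spow v j) a b) 0) => [->|nz2]; first by rewrite mulr0.
exfalso; have [e1 e2] := H _ _ nz nz2; move: hij.
by rewrite -!val_eqE /= e1 e2 !eqxx.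
Qed.

End S.

Section U.
Variable R : realType.
Variables (p : ser1 R) (q : ser2 R) (dl : nat).
Hypothesis hd1 : (1 <= dl)%N.
Hypothesis hp0 : forall i, (i < dl)%N -> p i = 0.
Hypothesis hpd : p dl != 0.

Lemma lift1_supp i j : lift1 p i j != 0 -> j = 0%N /\ (dl <= i)%N.
Proof.
rewrite /lift1; case: (eqVneq j 0%N) => [->|]; last by rewrite eqxx.
move=> nz; split=> //; rewrite leqNgt; apply/negP => h.
by move: nz; rewrite hp0 ?eqxx.
Qed.

Lemma U_inv m : flat (iterf p q m).1 /\ ordge (iterf p q m).1 1 0 (dl ^ m)%N /\
   (iterf p q m).1 (dl ^ m)%N 0%N != 0.
Proof.
elim: m => [|m [hf [ho hl]]].
  rewrite /= expn0; split; [|split].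
  - by move=> i j; rewrite /sZ; case: ifP => [/andP [_ /eqP]|]; rewrite ?eqxx.
  - by move=> i j; rewrite /sZ; case: ifP => [/andP [/eqP -> /eqP ->]|]; rewrite ?eqxx.
  - by rewrite /sZ /= oner_neq0.
set u := (iterf p q m).1; set v := (iterf p q m).2.
have hpos : (0 < dl ^ m)%N by rewrite expn_gt0; lia.
have supp : forall a b, scomp (lift1 p) u v a b != 0 -> b = 0%N /\ (dl ^ m.+1 <= a)%N.
  move=> a b /scomp_nz [i [j [h1 h2]]].
  have [j0 hi] := lift1_supp h1; rewrite j0 in h2.
  split; first exact: smul_pow_flat h2 hf.
  have := smul_pow_ord h2 ho (@ordge0 R v 1 0); rewrite expnS; nia.
split; [|split].
- by move=> a b /supp [].
- by move=> a b /supp [-> h]; rewrite mul1n muln0 addn0.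
rewrite /= -/u -/v (@scomp_single _ _ _ _ _ _ dl 0%N).
- have -> : (dl ^ m.+1 = dl * dl ^ m)%N by rewrite expnS.
  rewrite smul_sone spow_lead //.
  by rewrite mulf_neq0 // ?expf_neq0 // /lift1 /=.
- rewrite expnS addn0; nia.
- by [].
- move=> i j h1 h2; have [j0 hi] := lift1_supp h1; split=> //.
  rewrite j0 in h2; have := smul_pow_ord h2 ho (@ordge0 R v 1 0).
  rewrite expnS; nia.
Qed.

End U.

Section V.
Variable R : realType.
Variables (p : ser1 R) (q : ser2 R) (dl M P gm : nat).
Hypothesis hd1 : (1 <= dl)%N.
Hypothesis hp0 : forall i, (i < dl)%N -> p i = 0.
Hypothesis hpd : p dl != 0.
Hypothesis hM : (0 < M)%N.
Hypothesis hP : (0 < P)%N.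
Hypothesis hq2 : forall i j, q i j != 0 -> (M * gm <= M * i + P * j)%N.
Hypothesis hdP : (dl * P < M * gm)%N.
Hypothesis hqg : q gm 0%N != 0.

Lemma qa_aux i j : q i j != 0 -> (M * (dl * gm) + j <= M * (dl * i + gm * j))%N.
Proof.
move=> nz; have h := hq2 nz.
have h1 := leq_mul (leqnn dl) h.
have h2 := leq_mul hdP (leqnn j).
nia.
Qed.

Lemma qa1 i j : q i j != 0 -> (dl * gm <= dl * i + gm * j)%N.
Proof.
move=> nz; have := qa_aux nz => h.
rewrite -(leq_pmul2l hM); lia.
Qed.

Lemma qa2 i j : q i j != 0 -> (0 < j)%N -> (dl * gm < dl * i + gm * j)%N.
Proof.
move=> nz hj; have := qa_aux nz => h.
rewrite -(ltn_pmul2l hM); lia.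
Qed.

Lemma q_gm i : q i 0%N != 0 -> (gm <= i)%N.
Proof. move=> nz; have := hq2 nz; rewrite muln0 addn0 leq_pmul2l //. Qed.

Section Step.
Variables (u v : ser2 R) (e : nat).
Hypothesis hf : flat u.
Hypothesis ho : ordge u 1 0 e.
Hypothesis hl : u e 0%N != 0.
Hypothesis he : (0 < e)%N.
Hypothesis hva : ordge v dl gm (gm * e).

Lemma Va : ordge (scomp q u v) dl gm (gm * (dl * e)).
Proof.
move=> a b /scomp_nz [i [j [h1 h2]]].
have := smul_pow_ord h2 (flat_ord dl gm hf ho) hva.
have := qa1 h1 => h3 h4.
have := leq_mul (leqnn e) h3; nia.
Qed.

Lemma Vb cv K : ordge v M P cv ->
  (forall i j, q i j != 0 -> (K <= i * (M * e) + j * cv)%N) ->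
  ordge (scomp q u v) M P K.
Proof.
move=> hv hK a b /scomp_nz [i [j [h1 h2]]].
have := smul_pow_ord h2 (flat_ord M P hf ho) hv.
have := hK _ _ h1; lia.
Qed.

Lemma Vc cv K : ordge v M P cv ->
  (forall i j, q i j != 0 -> (0 < j)%N -> (K < i * (M * e) + j * cv)%N) ->
  forall a b, scomp q u v a b != 0 -> (0 < b)%N -> (K < M * a + P * b)%N.
Proof.
move=> hv hK a b /scomp_nz [i [j [h1 h2]]] hb.
case: (posnP j) => hj.
  by rewrite hj in h2; have := smul_pow_flat h2 hf; lia.
have := smul_pow_ord h2 (flat_ord M P hf ho) hv.
have := hK _ _ h1 hj; lia.
Qed.

Lemma Vd : scomp q u v (gm * e)%N 0%N != 0.
Proof.
rewrite (@scomp_single _ _ _ _ _ _ gm 0%N).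
- rewrite smul_sone spow_lead // mulf_neq0 // expf_neq0 //.
- rewrite addn0; nia.
- by [].
move=> i j h1 h2.
have hb := smul_pow_ord h2 (flat_ord dl gm hf ho) hva.
have hc := smul_pow_ord h2 ho (@ordge0 R v 1 0).
case: (posnP j) => hj.
  rewrite hj in h1 *; split=> //.
  have := q_gm h1; move: hc; rewrite hj !muln0 !addn0 mul1n => hc hg.
  apply/eqP; rewrite eqn_leq hg andbT -(leq_pmul2r he); lia.
have := qa2 h1 hj => h3; exfalso.
have h4 : (e * (dl * gm) < e * (dl * i + gm * j))%N by rewrite ltn_pmul2l.
move: hb h4; rewrite muln0 addn0; nia.
Qed.

End Step.

Lemma V_inv m : let Q := (iterf p q m.+1).2 in
  [/\ ordge Q dl gm (gm * dl ^ m.+1)%N, ordge Q M P (M * (gm * dl ^ m))%N,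
      Q (gm * dl ^ m)%N 0%N != 0 &
      ((0 < m)%N -> forall a b, Q a b != 0 -> (0 < b)%N ->
         (M * (gm * dl ^ m) < M * a + P * b)%N)].
Proof.
elim: m => [|m IH].
  have [hf [ho hl]] := @U_inv R p q dl hd1 hp0 hpd 0.
  rewrite /= expn0 in hf ho hl *.
  have hva : ordge (@sW R) dl gm (gm * 1).
    move=> i j; rewrite /sW; case: ifP => [/andP [/eqP -> /eqP ->] _|]; [lia|by rewrite eqxx].
  have hvm : ordge (@sW R) M P P.
    move=> i j; rewrite /sW; case: ifP => [/andP [/eqP -> /eqP ->] _|]; [lia|by rewrite eqxx].
  split.
  - rewrite expn1; have := Va hf ho hl (isT : (0 < 1)%N) hva; rewrite muln1 mulnC //.
  - rewrite muln1; apply: (Vb hf ho hl (isT : (0 < 1)%N) hvm) => i j nz; have := hq2 nz; lia.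
  - rewrite muln1; have := Vd hf ho hl (isT : (0 < 1)%N) hva; rewrite muln1 //.
  - by [].
have [hf [ho hl]] := @U_inv R p q dl hd1 hp0 hpd m.+1.
move: IH => /= [IH1 IH2 _ _].
set u := (iterf p q m.+1).1 in hf ho hl *.
set v := (iterf p q m.+1).2 in IH1 IH2 *.
have he : (0 < dl ^ m.+1)%N by rewrite expn_gt0; lia.
have hm : (0 < dl ^ m)%N by rewrite expn_gt0; lia.
have eS : (dl ^ m.+1 = dl * dl ^ m)%N by rewrite expnS.
split.
- rewrite expnS; exact: Va hf ho hl he IH1.
- apply: (Vb hf ho hl he IH2) => i j nz; have := qa1 nz => h.
  have := leq_mul (leqnn (M * dl ^ m)) h; rewrite eS; nia.
- exact: Vd hf ho hl he IH1.
- move=> _; apply: (Vc hf ho hl he IH2) => i j nz hj; have := qa2 nz hj => h.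
  have hMm : (0 < M * dl ^ m)%N by rewrite muln_gt0 hM hm.
  have h5 : (M * dl ^ m * (dl * gm) < M * dl ^ m * (dl * i + gm * j))%N by rewrite ltn_pmul2l.
  rewrite eS; nia.
Qed.

End V.

Section G.
Variable R : realType.
Variable g : ser2 R.

Lemma newton_supp i j : g i j != 0 -> newton g i%:R j%:R.
Proof.
move=> nz; exists 1%N, (fun _ => 1), (fun _ => i%:R), (fun _ => j%:R).
rewrite !big_ord1 !mul1r; split=> //; split=> //; split=> //.
by move=> _; exists i, j.
Qed.

Lemma newton_lin (a b c : R) : 0 <= a -> 0 <= b ->
  (forall i j, g i j != 0 -> c <= a * i%:R + b * j%:R) ->
  forall x y, newton g x y -> c <= a * x + b * y.
Proof.
move=> ha hb H x y [k [lam [px [py [hl [hs [hp [-> ->]]]]]]]].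
rewrite !mulr_sumr -big_split /= -[c]mulr1 -hs mulr_sumr.
apply: ler_sum => t _.
have [i [j [nz [hi hj]]]] := hp t.
have := H _ _ nz => hc.
have : c <= a * px t + b * py t.
  apply: (le_trans hc); apply: lerD; apply: ler_wpM2l => //.
move=> h; have := hl t => h0.
rewrite !mulrA ![_ * lam t]mulrC -!mulrA -mulrDr; exact: ler_wpM2l.
Qed.

Lemma newton2 i1 j1 i2 j2 (t c : R) : g i1 j1 != 0 -> g i2 j2 != 0 ->
  0 <= t <= 1 -> 0 <= c ->
  newton g (t * i1%:R + (1 - t) * i2%:R) (t * j1%:R + (1 - t) * j2%:R + c).
Proof.
move=> n1 n2 /andP [t0 t1] c0.
exists 2%N, (fun k : 'I_2 => if val k == 0%N then t else 1 - t),
  (fun k : 'I_2 => if val k == 0%N then i1%:R else i2%:R),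
  (fun k : 'I_2 => if val k == 0%N then j1%:R + c else j2%:R + c).
rewrite !big_ord_recl !big_ord0 /= !addr0; split.
  by move=> k; case: ifP => _; lra.
split; first by lra.
split; last by split=> //; ring.
move=> k; case: ifP => _.
  by exists i1, j1; split=> //; split=> //; lra.
by exists i2, j2; split=> //; split=> //; lra.
Qed.

Lemma conv_eq (t X1 X2 c : R) : 0 < t < 1 -> c <= X1 -> c <= X2 ->
  t * X1 + (1 - t) * X2 = c -> X1 = c /\ X2 = c.
Proof.
move=> /andP [t0 t1] h1 h2 e.
have a1 : 0 <= t * (X1 - c) by apply: mulr_ge0; lra.
have a2 : 0 <= (1 - t) * (X2 - c) by apply: mulr_ge0; lra.
have s : t * (X1 - c) + (1 - t) * (X2 - c) = 0 by rewrite -e; ring.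
have z1 : t * (X1 - c) = 0 by lra.
have z2 : (1 - t) * (X2 - c) = 0 by lra.
move: z1 z2 => /eqP; rewrite mulf_eq0 => /orP [/eqP|/eqP]; first lra.
move=> h3 /eqP; rewrite mulf_eq0 => /orP [/eqP|/eqP]; lra.
Qed.

Lemma lex_vertex (A B a b : nat) : g a b != 0 -> (0 < B)%N ->
  (forall i j, g i j != 0 -> (A * a + B * b <= A * i + B * j)%N) ->
  (forall i j, g i j != 0 -> (A * a + B * b)%N = (A * i + B * j)%N -> (a <= i)%N) ->
  is_vertex g a%:R b%:R.
Proof.
move=> nz hB h1 h2; split; first exact: newton_supp.
move=> x1 y1 x2 y2 t n1 n2 ht ex ey.
pose c1 : R := A%:R * a%:R + B%:R * b%:R.
have L1 : forall x y, newton g x y -> c1 <= A%:R * x + B%:R * y.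
  apply: newton_lin => // i j nzij; rewrite /c1 -!natrM -!natrD ler_nat; exact: h1.
have L2 : forall x y, newton g x y ->
    a%:R * c1 + a%:R <= (a%:R * A%:R + 1) * x + (a%:R * B%:R) * y.
  apply: newton_lin => //.
    by apply: addr_ge0 => //; apply: mulr_ge0.
    by apply: mulr_ge0.
  move=> i j nzij.
  have H : (a * (A * a + B * b) + a <= (a * A + 1) * i + (a * B) * j)%N.
    have := h1 _ _ nzij; have := h2 _ _ nzij.
    case: (eqVneq (A * a + B * b)%N (A * i + B * j)%N) => [e|ne].
      by move=> /(_ e) hai _; rewrite e; nia.
    move=> _ hle; have hlt : (A * a + B * b < A * i + B * j)%N by rewrite ltn_neqAle ne.
    nia.
  move: H; rewrite -(ler_nat R) !natrD !natrM /c1 => H; lra.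
have L3 : forall x y, newton g x y -> A%:R * x + B%:R * y = c1 -> a%:R <= x.
  move=> x y nxy e; have := L2 _ _ nxy.
  have -> : (a%:R * A%:R + 1) * x + a%:R * B%:R * y = a%:R * (A%:R * x + B%:R * y) + x by ring.
  rewrite e; lra.
have e1 : t * (A%:R * x1 + B%:R * y1) + (1 - t) * (A%:R * x2 + B%:R * y2) = c1.
  by rewrite /c1 ex ey; ring.
have [f1 f2] := conv_eq ht (L1 _ _ n1) (L1 _ _ n2) e1.
have [ex1 ex2] := conv_eq ht (L3 _ _ n1 f1) (L3 _ _ n2 f2) (esym ex).
have hB' : (0 : R) < B%:R by rewrite ltr0n.
have ey1 : y1 = b%:R.
  apply: (mulfI (x := B%:R)); first by rewrite pnatr_eq0 -lt0n.
  move: f1; rewrite /c1 ex1; lra.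
have ey2 : y2 = b%:R.
  apply: (mulfI (x := B%:R)); first by rewrite pnatr_eq0 -lt0n.
  move: f2; rewrite /c1 ex2; lra.
by rewrite ex1 ex2 ey1 ey2.
Qed.

Lemma above_not_vertex x y i1 j1 i2 j2 (t : R) : is_vertex g x y ->
  g i1 j1 != 0 -> g i2 j2 != 0 -> 0 <= t <= 1 ->
  x = t * i1%:R + (1 - t) * i2%:R -> t * j1%:R + (1 - t) * j2%:R < y -> False.
Proof.
move=> [_ hv] n1 n2 ht ex hy.
set sy := t * j1%:R + (1 - t) * j2%:R in hy.
have N1 := newton2 n1 n2 ht (lexx 0).
have N2 := newton2 n1 n2 ht (c := 2 * (y - sy)) ltac:(lra).
rewrite -ex addr0 -/sy in N1; rewrite -ex -/sy in N2.
have := hv _ _ _ _ (1/2) N1 N2 ltac:(lra) ltac:(lra) ltac:(lra).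
move=> [_ e]; lra.
Qed.

End G.

Section Q.
Variable R : realType.
Variables (q : ser2 R) (s : nat) (nv mv : nat -> nat).
Hypothesis hvert : forall x y : R, is_vertex q x y <->
     exists k, [/\ (1 <= k <= s)%N, x = (nv k)%:R & y = (mv k)%:R].
Hypothesis hord : forall k, (1 <= k < s)%N -> (nv k < nv k.+1)%N /\ (mv k.+1 < mv k)%N.
Hypothesis hs1 : (1 < s)%N.
Hypothesis hms : mv s = 0%N.
Hypothesis hqex : exists i j, q i j != 0.

Lemma chain k k' : (1 <= k)%N -> (k < k')%N -> (k' <= s)%N ->
  (nv k < nv k')%N /\ (mv k' < mv k)%N.
Proof.
move=> hk; elim: k' => [//|k' IH] hkk' hk's.
case: (ltngtP k k') => [lt|gt|eq].
- have [a1 a2] := IH lt (ltnW hk's).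
  have [b1 b2] := hord (k := k') ltac:(lia).
  split; lia.
- lia.
- rewrite -eq; apply: hord; lia.
Qed.

Lemma vert_nat a b : is_vertex q a%:R b%:R ->
  exists k, [/\ (1 <= k <= s)%N, a = nv k & b = mv k].
Proof.
move=> /hvert [k [hk ea eb]]; exists k; split=> //.
  by apply/eqP; rewrite -(eqr_nat R) ea.
by apply/eqP; rewrite -(eqr_nat R) eb.
Qed.

Lemma q1 : q (nv s) 0%N != 0.
Proof.
have ex1 : exists k, exists i, q i k != 0 by case: hqex => i [j h]; exists j; exists i.
have [b1 [[a' h1] hb1]] := ex_min ex1.
have ex2 : exists i, q i b1 != 0 by exists a'.
have [a1 [ha1 hmin]] := ex_min ex2.
have hv : is_vertex q a1%:R b1%:R.
  apply: (@lex_vertex R q 0%N 1%N) => //.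
    by move=> i j nz; rewrite !mul0n !mul1n !add0n; apply: hb1; exists i.
  by move=> i j nz; rewrite !mul0n !mul1n !add0n => e; apply: hmin; rewrite e.
have [k [hk ea eb]] := vert_nat hv.
have hs : is_vertex q (nv s)%:R 0 by apply/hvert; exists s; split=> //; [lia | rewrite hms].
have H : forall x y, newton q x y -> b1%:R <= 0 * x + 1 * y.
  apply: newton_lin => // i j nz; rewrite mul0r add0r mul1r (ler_nat R).
  by apply: hb1; exists i.
have := H _ _ hs.1; rewrite mul0r add0r mul1r => hb.
have b0 : b1 = 0%N.
  apply/eqP; rewrite -(eqr_nat R) eq_le hb /=; exact: ler0n.
have ks : k = s.
  case/andP: hk => hk1 hk2.
  apply/eqP; rewrite eqn_leq hk2 /=; rewrite leqNgt; apply/negP => lt.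
  have [_ c2] := chain hk1 lt (leqnn s); lia.
by move: ha1; rewrite ea ks b0.
Qed.


Lemma q2 i j : q i j != 0 ->
  (mv s.-1 * nv s <= mv s.-1 * i + (nv s - nv s.-1) * j)%N.
Proof.
set M := mv s.-1; set P := (nv s - nv s.-1)%N; set gm := nv s.
have hsS : s.-1.+1 = s by rewrite prednK //; lia.
have [o1 o2] : (nv s.-1 < nv s)%N /\ (mv s < mv s.-1)%N.
  by have := @hord s.-1; rewrite hsS => h; apply: h; lia.
have hP : (0 < P)%N by rewrite /P subn_gt0.
move=> nz; rewrite leqNgt; apply/negP => lt0.
have ex1 : exists w, exists i j, q i j != 0 /\ (M * i + P * j)%N = w.
  by exists (M * i + P * j)%N; exists i; exists j; split.
have [w0 [[a'' [b'' [h1'' h2'']]] hw]] := ex_min ex1.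
have ex2 : exists a, exists b, q a b != 0 /\ (M * a + P * b)%N = w0 by exists a''; exists b''; split.
have [a0 [[b0 [hab hw0]] hmin]] := ex_min ex2.
have hv : is_vertex q a0%:R b0%:R.
  apply: (@lex_vertex R q M P) => //.
    by move=> i' j' nz'; rewrite hw0; apply: hw; exists i'; exists j'.
  by move=> i' j' nz' e; apply: hmin; exists j'; rewrite -e.
have wlt : (w0 < M * gm)%N.
  by apply: (leq_ltn_trans _ lt0); apply: hw; exists i; exists j.
have [k [hk ea eb]] := vert_nat hv.
case/andP: hk => hk1 hk2.
case: (ltngtP k s.-1) => [klt|kgt|keq].
- have [c1 _] := chain hk1 klt ltac:(lia).
  have hvs : is_vertex q (nv s.-1)%:R (mv s.-1)%:R.
    by apply/hvert; exists s.-1; split=> //; lia.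
  have a0lt : (a0 < gm)%N by rewrite ea /gm; lia.
  pose D := (gm - a0)%N.
  have hD : (0 : R) < D%:R by rewrite ltr0n /D subn_gt0.
  have eD : (D%:R : R) = gm%:R - a0%:R by rewrite /D natrB //; lia.
  have eP : (P%:R : R) = gm%:R - (nv s.-1)%:R by rewrite /P natrB //; lia.
  have key : (P * b0 < M * D)%N.
    rewrite /D; have := hw0; move: a0lt; nia.
  have key' : (P%:R * b0%:R < M%:R * D%:R :> R) by rewrite -!natrM (ltr_nat R).
  apply: (@above_not_vertex R q _ _ a0 b0 gm 0%N (P%:R / D%:R) hvs hab q1).
  + apply/andP; split; first by apply: divr_ge0; [exact: ler0n | exact: ltW].
    rewrite ler_pdivrMr // mul1r (ler_nat R) /P /D /gm ea.
    move: c1 o1; move: (nv s.-1) (nv s) (nv k) => x y z; lia.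
  + have tD : P%:R / D%:R * D%:R = P%:R :> R by rewrite divfK // gt_eqF.
    move: tD; set t := P%:R / D%:R; rewrite eD eP mulrBr => tD.
    rewrite mulrBl mul1r; lra.
  + rewrite mulr0 addr0 mulrAC ltr_pdivrMr //.
- have ks : k = s by lia.
  rewrite ks hms in ea eb; rewrite ea eb in hw0; lia.
- rewrite keq in ea eb; rewrite ea eb in hw0.
  have hPd : (P + nv s.-1 = gm)%N by rewrite /P subnK //; lia.
  move: wlt; rewrite -hw0 -hPd /M; nia.
Qed.

End Q.

Unset Implicit Arguments.
Set Strict Implicit.

Lemma rat_le (L x y ca ci b j : nat) : (0 < L)%N -> (ca * x = L)%N -> (ci * y = L)%N ->
  (b * ca <= j * ci)%N -> (b * y <= j * x)%N.
Proof.
move=> hL e1 e2 h; have h' := leq_mul h (leqnn (x * y)).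
rewrite -(leq_pmul2l hL); rewrite -{1}e1 -e2; nia.
Qed.

Lemma rat_eq (L x y ca ci b j : nat) : (0 < x)%N -> (0 < y)%N -> (ca * x = L)%N -> (ci * y = L)%N ->
  (b * y = j * x)%N -> (b * ca = j * ci)%N.
Proof.
move=> hx hy e1 e2 h; have hxy : (0 < x * y)%N by rewrite muln_gt0 hx hy.
apply/eqP; rewrite -(eqn_pmul2r hxy).
have -> : (b * ca * (x * y) = (ca * x) * (b * y))%N by ring.
have -> : (j * ci * (x * y) = (ci * y) * (j * x))%N by ring.
by rewrite e1 e2 h.
Qed.

Theorem mainTheorem6 (R : realType) (p : ser1 R) (q : ser2 R) (delta : nat)
    (s : nat) (nv mv : nat -> nat) :
  let T : R := yintercept (nv s.-1)%:R (mv s.-1)%:R (nv s)%:R (mv s)%:R in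
  let gamma : nat := nv s in
  let d : nat := mv s in
  let l1 : R := ((nv s)%:R - (nv s.-1)%:R) / ((mv s.-1)%:R - (mv s)%:R) in
  let alpha : R := gamma%:R / (delta%:R - d%:R) in
  let gam (n : nat) : nat := (gamma * delta ^ n.-1)%N in
  (1 <= delta)%N ->
  (forall i, (i < delta)%N -> p i = 0) -> p delta != 0 ->
  convergent1 p -> convergent2 q ->
  q 0%N 0%N = 0 -> (exists i j, q i j != 0) ->
  (forall x y : R, is_vertex q x y <->
     exists k, [/\ (1 <= k <= s)%N, x = (nv k)%:R & y = (mv k)%:R]) ->
  (forall k, (1 <= k < s)%N -> (nv k < nv k.+1)%N /\ (mv k.+1 < mv k)%N) ->
  (1 < s)%N -> delta%:R <= T ->
  d = 0%N -> delta%:R < T ->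
  (forall n, (1 <= n)%N ->
     Qn p q n (gam n) 0%N != 0 /\
     (forall l : R, l1 <= l <= alpha -> wl_eq (Qn p q n) l (gam n)%:R)) /\
  (forall n, (2 <= n)%N ->
     (forall x y : R, newton (Qn p q n) x y <-> (gam n)%:R <= x /\ 0 <= y)
     \/
     (is_vertex (Qn p q n) (gam n)%:R 0 /\
      exists x' y' : R,
        [/\ is_vertex (Qn p q n) x' y', x' < (gam n)%:R,
            (forall x'' y'' : R, is_vertex (Qn p q n) x'' y'' ->
               ~ (x' < x'' < (gam n)%:R)) &
            - (y' / ((gam n)%:R - x')) < - l1^-1])).
Proof.
move=> T gm d l1 alpha gam hd1 hp0 hpd _ _ hq00 hqex hvert hord hs1 _ hd0 hTlt.
have hms : mv s = 0%N := hd0.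
have hsS : s.-1.+1 = s by rewrite prednK //; lia.
have [o1 o2] : (nv s.-1 < nv s)%N /\ (mv s < mv s.-1)%N.
  by have := hord s.-1; rewrite hsS => h; apply: h; lia.
have Q1 := @q1 R q s nv mv hvert hord hs1 hms hqex.
have Q2 := @q2 R q s nv mv hvert hord hs1 hms hqex.
set M := mv s.-1 in o2 Q2.
set P := (nv s - nv s.-1)%N in Q2.
have hP : (0 < P)%N by rewrite /P subn_gt0.
have hM : (0 < M)%N by rewrite /M; lia.
have eP : (P%:R : R) = (nv s)%:R - (nv s.-1)%:R by rewrite /P natrB //; lia.
have hPR : (0 : R) < P%:R by rewrite ltr0n.
have hMR : (0 : R) < M%:R by rewrite ltr0n.
have hdP : (delta * P < M * gm)%N.
  have eT : T * P%:R = (M * gm)%:R.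
    rewrite /T /yintercept hms natrM eP /gm /M.
    field; rewrite -eP; exact: lt0r_neq0.
  by rewrite -(ltr_nat R) natrM -eT ltr_pM2r.
have hl1 : l1 = P%:R / M%:R by rewrite /l1 hms subr0 eP.
have VI := @V_inv R p q delta M P gm hd1 hp0 hpd hM hP Q2 hdP Q1.
split.
  move=> n; case: n => [//|m] _.
  have [_ h2 h3 _] := VI m.
  rewrite /gam /=.
  set N := (gm * delta ^ m)%N in h2 h3 *.
  split; first exact: h3.
  move=> l /andP [hl1l _]; split.
    by exists N, 0%N; split=> //; rewrite mulr0 addr0.
  move=> i j nz; have := h2 _ _ nz => h.
  have hPl : P%:R <= l * M%:R by rewrite -ler_pdivrMr // -hl1.
  have hR : (M * N)%:R <= (M * i + P * j)%:R :> R by rewrite (ler_nat R).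
  rewrite natrD (natrM _ M N) (natrM _ M i) (natrM _ P j) in hR.
  have hj : P%:R * j%:R <= l * M%:R * j%:R := ler_wpM2r (ler0n _ j) hPl.
  rewrite -(ler_pM2l hMR) mulrDr.
  have -> : M%:R * (l * j%:R) = l * M%:R * j%:R by ring.
  lra.
move=> n; case: n => [//|m] hm.
have [_ h2 h3 h4] := VI m.
have h4' := h4 ltac:(lia).
rewrite /gam /=.
set N := (gm * delta ^ m)%N in h2 h3 h4' *.
change (ordge (Qn p q m.+1) M P (M * N)%N) in h2.
change (is_true (Qn p q m.+1 N 0%N != 0)) in h3.
change (forall a b, Qn p q m.+1 a b != 0 -> (0 < b)%N -> (M * N < M * a + P * b)%N) in h4'.
set g := Qn p q m.+1 in h2 h3 h4' *.
case: (classic (exists i j, g i j != 0 /\ (i < N)%N)) => [[i0 [j0 [nz0 lt0]]]|none].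
  right.
  have hN : (0 < N)%N by apply: leq_ltn_trans lt0.
  pose L := N`!.
  have hL : (0 < L)%N by rewrite /L fact_gt0.
  pose kap i j := (j * (L %/ (N - i)))%N.
  have ex1 : exists k, exists i j, [/\ g i j != 0, (i < N)%N & kap i j = k].
    by exists (kap i0 j0); exists i0; exists j0.
  have [k0 [[a1 [b1 [h11 h12 h13]]] hk0]] := ex_min ex1.
  have ex2 : exists a, exists b, [/\ g a b != 0, (a < N)%N & kap a b = k0].
    by exists a1; exists b1.
  have [a [[b [hab haN hkab]] hamin]] := ex_min ex2.
  have divL : forall i, (i < N)%N -> (L %/ (N - i) * (N - i) = L)%N.
    by move=> i hi; rewrite divnK // dvdn_fact //; apply/andP; split; [rewrite subn_gt0 | exact: leq_subr].
  have R1 : forall i j, g i j != 0 -> (i < N)%N -> (b * (N - i) <= j * (N - a))%N.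
    move=> i j nz hi; apply: (@rat_le L _ _ _ _ b j hL (divL a haN) (divL i hi)).
    by rewrite -/(kap a b) hkab; apply: hk0; exists i; exists j.
  have R2 : forall i j, g i j != 0 -> (i < N)%N -> (b * (N - i) = j * (N - a))%N -> (a <= i)%N.
    move=> i j nz hi e; apply: hamin; exists j; split=> //.
    rewrite -hkab /kap; apply: esym.
    apply: (@rat_eq L _ _ _ _ b j _ _ (divL a haN) (divL i hi) e); by rewrite subn_gt0.
  have hb : (0 < b)%N.
    have := h2 _ _ hab; rewrite lt0n; apply: contraTneq => ->.
    rewrite muln0 addn0 -ltnNge ltn_pmul2l //.
  pose D := (N - a)%N.
  have hD : (0 < D)%N by rewrite /D subn_gt0.
  have hbN : (b * a + D * b = b * N)%N.
    by rewrite [(D * b)%N]mulnC -mulnDr /D subnKC // ltnW.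
  have C1 : forall i j, g i j != 0 -> (b * a + D * b <= b * i + D * j)%N.
    move=> i j nz; rewrite hbN; case: (ltnP i N) => hi.
      have e : (b * N = b * i + b * (N - i))%N by rewrite -mulnDr subnKC // ltnW.
      have := R1 _ _ nz hi; rewrite -/D [(j * D)%N]mulnC => h; by rewrite e leq_add2l.
    exact: leq_trans (leq_mul (leqnn b) hi) (leq_addr _ _).
  have hvV : is_vertex g a%:R b%:R.
    apply: (@lex_vertex R g b D a b hab hD C1).
    move=> i j nz e; case: (ltnP i N) => hi; last exact: leq_trans (ltnW haN) hi.
    have e2 : (b * N = b * i + b * (N - i))%N by rewrite -mulnDr subnKC // ltnW.
    apply: (R2 _ _ nz hi); rewrite -/D; move: e; rewrite hbN e2 => /eqP.
    by rewrite eqn_add2l [(D * j)%N]mulnC => /eqP.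
  have hvN : is_vertex g N%:R 0.
    apply: (@lex_vertex R g M P N 0%N h3 hP).
      by move=> i j nz; rewrite muln0 addn0; apply: h2.
    move=> i j nz; rewrite muln0 addn0 => e.
    case: (posnP j) => hj.
      by move: e; rewrite hj muln0 addn0 => /eqP; rewrite eqn_pmul2l // => /eqP ->.
    by have := h4' _ _ nz hj; rewrite -e ltnn.
  split=> //; exists a%:R, b%:R; split=> //.
  - by rewrite (ltr_nat R).
  - move=> x'' y'' hv'' /andP [hx1 hx2].
    have hDR : (0 : R) < D%:R by rewrite ltr0n.
    have eD : (D%:R : R) = N%:R - a%:R by rewrite /D natrB // ltnW.
    have Lpsi : (b * N)%:R <= b%:R * x'' + D%:R * y''.
      apply: (@newton_lin R g b%:R D%:R (b * N)%:R (ler0n _ _) (ler0n _ _) _ x'' y'' hv''.1).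
      move=> i j nz; rewrite -!natrM -natrD (ler_nat R) -hbN; exact: C1.
    rewrite natrM in Lpsi.
    pose t := (N%:R - x'') / D%:R.
    have tD : t * D%:R = N%:R - x'' by rewrite /t divfK // gt_eqF.
    have t0 : 0 < t by rewrite /t divr_gt0 // subr_gt0.
    have t1 : t < 1 by rewrite /t ltr_pdivrMr // mul1r eD; lra.
    have ex : x'' = t * a%:R + (1 - t) * N%:R.
      rewrite eD mulrBr in tD; rewrite mulrBl mul1r; lra.
    have e1 : D%:R * (t * b%:R) = b%:R * N%:R - b%:R * x''.
      by rewrite mulrA [D%:R * t]mulrC tD; ring.
    have hy1 : D%:R * (t * b%:R) <= D%:R * y'' by lra.
    rewrite ler_pM2l // in hy1.
    case: (ltrP (t * b%:R) y'') => hy2.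
      apply: (@above_not_vertex R g x'' y'' a b N 0%N t hv'' hab h3) => //.
        by apply/andP; split; lra.
      by rewrite mulr0 addr0.
    have ey : y'' = t * b%:R + (1 - t) * 0 by rewrite mulr0 addr0; apply: le_anti; rewrite hy1 hy2.
    have [ea _] := hv''.2 _ _ _ _ t (newton_supp hab) (newton_supp h3)
       ltac:(by apply/andP; split) ex ey.
    by move: haN; rewrite -(ltr_nat R) ea ltxx.
  - rewrite ltrN2 hl1 invf_div.
    rewrite ltr_pdivrMr // mulrAC ltr_pdivlMr; last by rewrite subr_gt0 (ltr_nat R).
    have key : (M * D < b * P)%N.
      have h := h4' _ _ hab hb.
      have e : (M * N = M * a + M * (N - a))%N by rewrite -mulnDr subnKC // ltnW.
      by rewrite e ltn_add2l in h; rewrite /D [(b * P)%N]mulnC.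
    rewrite -natrB ?(ltnW haN) // -/D -!natrM (ltr_nat R); exact: key.
left => x y; split.
- move=> nw; split.
  + have := @newton_lin R g 1 0 N%:R ler01 (lexx 0) _ x y nw.
    rewrite mul1r mul0r addr0; apply.
    move=> i j nz; rewrite mul1r mul0r addr0 (ler_nat R) leqNgt; apply/negP => lt.
    by apply: none; exists i, j.
  + have := @newton_lin R g 0 1 0 (lexx 0) ler01 _ x y nw.
    rewrite mul0r add0r mul1r; apply.
    by move=> i j _; rewrite mul0r add0r mul1r; exact: ler0n.
- move=> [hx hy]; exists 1%N, (fun _ => 1), (fun _ => x), (fun _ => y).
  rewrite !big_ord1 !mul1r; split=> //; split=> //; split=> //.
  by move=> _; exists N, 0%N; split=> //; split.
Qed.
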